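(* Fix an integer base $b\ge 2$ and $f_*:\{0,\dots,b-1\}\to\mathbb{Z}^{\ge 0}$ with $f_*(0)=0$, $f_*(1)=1$, $\gcd(b,f_*(b-1))=1$, and suppose there is a digit $0\le m_*\le b-1$ with $\gcd(f(m_* )-m_*,f(b-1))=1$, where $f$ is the digit map $f\left(\sum_i a_ib^i\right)=\sum_i f_*(a_i)$ (base-$b$ representation). Let $D$ be the set of positive integers $n$ with $f^r(n)=n$ for some $r\ge1$, and fix $u\in D$. Assume that for each $x\in D$ there exists $h_x\in\mathbb{Z}^+$ such that $h_x+u$ and $h_x+x$ are concurrently $u$-integers. Then there exists $h\in\mathbb{Z}^+$ such that $h+x$ is a $u$-integer for each $x\in D$.
   Context: $f^r$ is the $r$-fold iterate of $f$. A positive integer $n$ is a $u$-integer if $f^r(n)=u$ for some $r\ge1$. Two positive integers $m,n$ are concurrently $u$-integers if there is some $r\ge 1$ with $f^r(m)=f^r(n)=u$. *)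

(* Defs.v *)
From mathcomp Require Import all_boot all_order all_algebra.
Set Implicit Arguments. Unset Strict Implicit. Unset Printing Implicit Defensive.

(* Base-b digits of n, least significant first (empty list for n = 0).
   The fuel n suffices since b >= 2 makes n %/ b < n for n > 0. *)
Fixpoint digits_aux (fuel b n : nat) : seq nat :=
  match fuel with
  | 0 => [::]
  | fuel'.+1 => if n == 0 then [::] else (n %% b) :: digits_aux fuel' b (n %/ b)
  end.

Definition digits (b n : nat) : seq nat := digits_aux n b n.

Definition digit_map (b : nat) (fstar : nat -> nat) (n : nat) : nat :=
  \sum_(a <- digits b n) fstar a.

Definition is_u_integer (f : nat -> nat) (u n : nat) : Prop :=
  exists r, 1 <= r /\ iter r f n = u.

Definition concurrently_u_integers (f : nat -> nat) (u m n : nat) : Prop :=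
  exists r, 1 <= r /\ iter r f m = u /\ iter r f n = u.

Definition in_D (f : nat -> nat) (n : nat) : Prop :=
  0 < n /\ exists r, 1 <= r /\ iter r f n = n.

(* Main.v *)
Require Import Defs.
From mathcomp Require Import all_boot all_order all_algebra.
From mathcomp Require Import zify cyclic.
From Stdlib Require Import Classical.

Lemma digits_aux_fuel b n f1 f2 : 2 <= b -> n <= f1 -> n <= f2 ->
  digits_aux f1 b n = digits_aux f2 b n.
Proof.
move=> hb; elim: f1 n f2 => [|f1 IH] n f2 h1 h2.
  have -> : n = 0 by lia.
  by case: f2 {h2}.
case: f2 h2 => [|f2] h2.
  by have -> : n = 0 by lia.
rewrite /=; case: eqP => // /eqP hn.
have hlt : n %/ b < n by apply: ltn_Pdiv; lia.
by rewrite (IH _ f2) //; lia.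
Qed.

Section DM.
Variables (b : nat) (fstar : nat -> nat).
Hypothesis hb : 2 <= b.
Hypothesis f0 : fstar 0 = 0.
Local Notation f := (digit_map b fstar).

Lemma dm0 : f 0 = 0.
Proof. by rewrite /digit_map /digits /= big_nil. Qed.

Lemma dm_step a r : r < b -> f (a * b + r) = f a + fstar r.
Proof.
move=> hr.
have [->|ha] := eqVneq a 0.
  case: r hr => [|r] hr; first by rewrite dm0 f0.
  rewrite mul0n add0n /digit_map /digits /= big_cons.
  rewrite modn_small // divn_small //.
  have -> : forall k, digits_aux k b 0 = [::] by case.
  by rewrite big_nil addn0.
rewrite /digit_map {1}/digits.
set n := a * b + r.
have hn : 0 < n by rewrite /n; lia.
case E: n hn => [//|N] _.
rewrite /= -E.
rewrite big_cons.
have -> : n %% b = r by rewrite /n modnMDl modn_small.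
have -> : n %/ b = a by rewrite /n divnMDl ?divn_small ?addn0 //; lia.
rewrite addnC; congr (_ + _).
rewrite /digits (@digits_aux_fuel b a N a hb) //.
have : a < n by rewrite /n; nia.
lia.
Qed.

Lemma dm_digit d : d < b -> f d = fstar d.
Proof. by move=> hd; have := @dm_step 0 d hd; rewrite mul0n add0n dm0. Qed.

Lemma dm_add a k n : n < b ^ k -> f (a * b ^ k + n) = f a + f n.
Proof.
elim: k n => [|k IH] n hn.
  have -> : n = 0 by move: hn; rewrite expn0; lia.
  by rewrite expn0 muln1 addn0 dm0 addn0.
have hb0 : 0 < b by lia.
rewrite (divn_eq n b).
have hq : n %/ b < b ^ k.
  by rewrite ltn_divLR // -expnSr.
have -> : a * b ^ k.+1 + (n %/ b * b + n %% b) = (a * b ^ k + n %/ b) * b + n %% b.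
  by rewrite expnSr; nia.
rewrite !dm_step ?ltn_mod // IH //; lia.
Qed.

End DM.

Section P2.
Variables (b : nat) (fstar : nat -> nat).
Hypothesis hb : 2 <= b.
Hypothesis f0 : fstar 0 = 0.
Hypothesis f1 : fstar 1 = 1.
Local Notation f := (digit_map b fstar).

Lemma dm_surj m : exists A, f A = m /\ (0 < m -> 0 < A).
Proof.
elim: m => [|m [A [hA _]]]; first by exists 0; rewrite dm0.
exists (A * b + 1); split; last lia.
by rewrite dm_step // f1 hA addn1.
Qed.

Lemma mem_le_sumn (X : seq nat) x : x \in X -> x <= sumn X.
Proof.
elim: X => [//|y X IH]; rewrite inE => /orP [/eqP ->|/IH]; rewrite /=; lia.
Qed.

Lemma shift_lemma j c (X : seq nat) : exists H, (0 < c -> 0 < H) /\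
  forall x, x \in X -> iter j f (H + x) = c + iter j f x.
Proof.
elim: j c X => [|j IH] c X; first by exists c.
have [H' [hH' eH']] := IH c (map f X).
have [A [hA hA0]] := dm_surj H'.
set t := (sumn X).+1.
exists (A * b ^ t); split.
  move=> /hH' /hA0 hA'; rewrite muln_gt0 hA' expn_gt0; lia.
move=> x hx.
rewrite !iterSr dm_add //; last first.
  apply: (leq_trans (ltn_expl x hb)); apply: leq_pexp2l; first lia.
  by have := @mem_le_sumn X x hx; rewrite /t; lia.
by rewrite hA eH' //; apply: map_f.
Qed.

Lemma le_sum_ord (g : nat -> nat) n i : i < n -> g i <= \sum_(k < n) g k.
Proof.
rewrite -(big_mkord xpredT g).
elim: n => [//|n IH] hi; rewrite big_nat_recr //=.
have [hin|] := ltnP i n; first by have := IH hin; lia.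
move=> hni; have e : i = n by lia.
by rewrite e; lia.
Qed.

Definition Mx := \sum_(d < b) fstar d.
Definition Kb := \sum_(a < 2 * Mx) f a + Mx.

Lemma f_bound n : 2 * f n <= 2 * Kb + n.
Proof.
elim/ltn_ind: n => n IH.
have hb0 : 0 < b by lia.
case: (posnP n) => [->|hn0]; first by rewrite dm0; lia.
rewrite (divn_eq n b) dm_step ?ltn_mod //.
set a := n %/ b; set r := n %% b.
have hr : fstar r <= Mx by apply: le_sum_ord; rewrite ltn_mod.
have [ha|ha] := ltnP a (2 * Mx).
  have := @le_sum_ord f _ _ ha; rewrite /Kb; lia.
have han : a < n by apply: ltn_Pdiv.
have := IH a han.
have : a * 2 <= a * b by rewrite leq_mul2l hb orbT.
rewrite -/a -/r.
lia.
Qed.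

Lemma iter_decr n i : iter i f n <= maxn (2 * Kb) (n - i).
Proof.
have fb := f_bound.
move: (2 * Kb) fb => K fb.
elim: i => [|i IH]; first by simpl; lia.
rewrite iterS.
have := fb (iter i f n).
lia.
Qed.

Lemma iter_mul x r k : iter r f x = x -> iter (r * k) f x = x.
Proof.
move=> hx; elim: k => [|k IH]; first by rewrite muln0.
by rewrite mulnS iterD IH hx.
Qed.

Lemma D_bound x : in_D f x -> x <= 2 * Kb.
Proof.
move=> [_ [r [hr hx]]].
have := iter_decr x (r * x).
rewrite iter_mul //.
have : x <= r * x by rewrite leq_pmull.
lia.
Qed.

Lemma iter_bound n i : iter i f n <= maxn (2 * Kb) n.
Proof. have := iter_decr n i; lia. Qed.

Lemma eventually_periodic n : exists i q, 0 < q /\ iter (q + i) f n = iter i f n.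
Proof.
set Mb := maxn (2 * Kb) n.
pose g (i : 'I_Mb.+2) : 'I_Mb.+1 := inord (iter i f n).
have : ~~ injectiveb g.
  apply/negP => /injectiveP hinj.
  have := @leq_card _ _ g hinj; rewrite !card_ord; lia.
move/injectivePn => [i [j hij hg]].
have eq : iter i f n = iter j f n.
  move: hg; rewrite /g => /(congr1 (@nat_of_ord _)).
  rewrite !inordK //; apply: (leq_ltn_trans (iter_bound _ _)); lia.
have hij' : (i : nat) != j by [].
have [lt|lt] := ltnP i j.
  exists i, (j - i); split; first lia.
  by rewrite subnK ?(ltnW lt) // eq.
exists j, (i - j); split; first lia.
by rewrite subnK ?lt.
Qed.

End P2.

Fixpoint num (P : nat) (s : seq nat) : nat :=
  if s is d :: s' then num P s' * P + d else 0.

Lemma num_ge P s : 0 < P -> sumn s <= num P s.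
Proof. move=> hP; elim: s => [//|d s IH] /=; nia. Qed.

Lemma num_mod P F w s : P = 1 + F * w -> exists j, num P s = sumn s + F * j.
Proof.
move=> hP; elim: s => [|d s [j IH]] /=; first by exists 0; lia.
exists (j + w * num P s); rewrite IH hP; nia.
Qed.

Lemma pow_mod P F w e : P = 1 + F * w -> exists j, P ^ e = 1 + F * j.
Proof.
move=> hP; elim: e => [|e [j IH]]; first by exists 0; rewrite expn0; lia.
exists (j + w + F * j * w); rewrite expnS IH hP; nia.
Qed.

Section P3.
Variables (b : nat) (fstar : nat -> nat).
Hypothesis hb : 2 <= b.
Hypothesis f0 : fstar 0 = 0.
Hypothesis f1 : fstar 1 = 1.
Local Notation f := (digit_map b fstar).

Lemma num_f o s : 0 < o -> all (fun d => d < b) s -> f (num (b ^ o) s) = sumn (map f s).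
Proof.
move=> ho; elim: s => [|d s IH] /=; first by rewrite dm0.
move=> /andP [hd hs]; rewrite dm_add // ?IH //; first lia.
apply: (leq_trans hd); rewrite -{1}(expn1 b); apply: leq_pexp2l; lia.
Qed.

Lemma dm_one : f 1 = 1.
Proof. by rewrite dm_digit. Qed.

Lemma dm_pow e : f (b ^ e) = 1.
Proof.
have := @dm_add b fstar hb f0 1 e 0; rewrite mul1n addn0 dm0 addn0 dm_one => -> //.
by rewrite expn_gt0; lia.
Qed.

Variable mstar : nat.
Hypothesis hm : mstar < b.
Hypothesis hcop1 : coprime b (f b.-1).
Hypothesis hcop2 : coprime `|f mstar - mstar|%N (f b.-1).

Lemma immortal_class rho : exists n E j, n = rho + j * f b.-1 /\ f n = b ^ E.
Proof.
set F := f b.-1.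
have hF : 0 < F.
  case: (posnP F) => // hF0; move: hcop1; rewrite -/F hF0 /coprime gcdn0; lia.
set o := totient F.
have ho : 0 < o by rewrite totient_gt0.
have [w hw] : exists w, b ^ o = 1 + F * w.
  have := Euler_exp_totient hcop1; rewrite -/F -/o.
  have hbo : 1 <= b ^ o by rewrite expn_gt0; lia.
  move=> /eqP; rewrite eqn_mod_dvd // => /dvdnP [w hw].
  exists w; lia.
set fm := f mstar.
set d := `|fm - mstar|%N.
have [a _ ha] := Bezoutl d hF.
have hg : gcdn F d = 1 by rewrite gcdnC; apply/eqP.
rewrite hg in ha; move: ha => /dvdnP [q hq].
have key : forall k, exists n E j1 j2, n = b ^ o * 0 + n /\
    f n = b ^ E /\ n = b ^ E - k * fm + k * mstar + F * j1 /\ b ^ E = 1 + F * j2 /\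
    k * fm + rho <= b ^ E /\ rho <= n.
  move=> k.
  set e := k * fm + rho.
  have hE : e < b ^ (o * e).
    apply: (leq_trans (ltn_expl e hb)); apply: leq_pexp2l; [lia|].
    by rewrite leq_pmull.
  set N1 := b ^ (o * e) - k * fm.
  set s := nseq N1 1 ++ nseq k mstar.
  have hs : all (fun d => d < b) s.
    rewrite all_cat; apply/andP; split; apply/allP => x /nseqP [-> _] //; lia.
  have [j1 hj1] := @num_mod (b ^ o) F w s hw.
  have [j2 hj2] := @pow_mod (b ^ o) F w e hw.
  rewrite -expnM in hj2.
  exists (num (b ^ o) s), (o * e), j1, j2.
  have hsum : sumn s = N1 + k * mstar.
    by rewrite sumn_cat !sumn_nseq; lia.
  have hsumf : sumn (map f s) = N1 + k * fm.
    by rewrite map_cat !map_nseq sumn_cat !sumn_nseq dm_one -/fm; lia.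
  split; first lia.
  split; first by rewrite num_f // hsumf /N1; lia.
  split; first by rewrite hj1 hsum /N1.
  split; first by [].
  split; first lia.
  have hP : 0 < b ^ o by rewrite expn_gt0; lia.
  have := @num_ge (b ^ o) s hP; rewrite hsum /N1; lia.
have fin : forall n X Y, n + F * X = rho + F * Y -> rho <= n ->
    exists j, n = rho + j * F.
  move=> n X Y h1 h2; exists (Y - X).
  have : F * X <= F * Y by lia.
  rewrite mulnBl; nia.
have [le|lt] := leqP mstar fm.
  have hd : fm = mstar + d by rewrite /d distnEl; lia.
  set t := rho + F - 1.
  have [n [E [j1 [j2 [_ [hfn [hn [hE [hle hr]]]]]]]]] := key (a * t).
  exists n, E.
  suff [j hj] : exists j, n = rho + j * F by exists j.
  apply: (fin n (q * t) (j1 + j2 + 1)) => //.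
  have e1 : a * t * d + t = t * q * F by rewrite -[t * q * F]mulnA -hq; nia.
  have e2 : a * t * fm = a * t * mstar + a * t * d by rewrite hd; nia.
  rewrite /t in e1 e2 *; nia.
have hd : mstar = fm + d by rewrite /d distnEr; lia.
set t := F - rho %% F + 1.
have [n [E [j1 [j2 [_ [hfn [hn [hE [hle hr]]]]]]]]] := key (a * t).
exists n, E.
suff [j hj] : exists j, n = rho + j * F by exists j.
apply: (fin n (1 + rho %/ F) (j1 + j2 + t * q)) => //.
have e1 : a * t * d + t = t * q * F by rewrite -[t * q * F]mulnA -hq; nia.
have e2 : a * t * mstar = a * t * fm + a * t * d by rewrite hd; nia.
have e3 : rho = rho %/ F * F + rho %% F by apply: divn_eq.
have e4 : rho %% F < F by rewrite ltn_mod.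
rewrite /t in e1 e2 *; nia.
Qed.
End P3.

Section P4.
Variables (b : nat) (fstar : nat -> nat) (mstar u : nat).
Hypothesis hb : 2 <= b.
Hypothesis f0 : fstar 0 = 0.
Hypothesis f1 : fstar 1 = 1.
Hypothesis hm : mstar < b.
Hypothesis hcop1 : coprime b (digit_map b fstar b.-1).
Hypothesis hcop2 : coprime `|digit_map b fstar mstar - mstar|%N (digit_map b fstar b.-1).
Local Notation f := (digit_map b fstar).
Hypothesis hu : in_D f u.
Hypothesis hyp : forall x, in_D f x ->
     exists hx, 0 < hx /\ concurrently_u_integers f u (hx + u) (hx + x).

Let dmpow := @dm_pow b fstar hb f0 f1.
Let dmone := @dm_one b fstar hb f0 f1.

Lemma iter_fix x r : f x = x -> iter r f x = x.
Proof. by move=> hx; elim: r => //= r ->. Qed.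

Lemma pow_sub j k0 : u < b ^ k0 ->
  f (b ^ (k0 + j) - u) = j * f b.-1 + f (b ^ k0 - u).
Proof.
move=> hk; have u0 : 0 < u by case: hu.
elim: j => [|j IH]; first by rewrite addn0.
have hb0 : 0 < b by lia.
have h1 : b ^ (k0 + j.+1) - u = b.-1 * b ^ (k0 + j) + (b ^ (k0 + j) - u).
  have : b ^ k0 <= b ^ (k0 + j) by apply: leq_pexp2l; lia.
  rewrite addnS expnS.
  move: (b ^ (k0 + j)) => X hX.
  have e : b = b.-1 + 1 by lia.
  rewrite {1}e mulnDl mul1n; move: (b.-1 * X) => Y; lia.
rewrite h1 dm_add //; last first.
  have : 0 < b ^ (k0 + j) by rewrite expn_gt0 hb0.
  lia.
rewrite IH; lia.
Qed.

Lemma sync0 : exists c R, 0 < c /\ 1 <= R /\ iter R f c = u /\ iter R f (c + u) = u.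
Proof.
have [u0 [p [hp hpu]]] := hu.
set k0 := u.
have hk0 : u < b ^ k0 by apply: ltn_expl.
set g := f (b ^ k0 - u).
have [n [E [j [hn hfn]]]] := @immortal_class b fstar hb f0 f1 mstar hm hcop1 hcop2 (u - 1 + g).
set s := b ^ (k0 + j) - u.
have hs : f s = g + j * f b.-1 by rewrite /s pow_sub //; lia.
have hbu : u < b ^ (k0 + j).
  apply: (leq_trans hk0); apply: leq_pexp2l; lia.
have [A [hA _]] := @dm_surj b fstar hb f0 f1 (u - 1).
set c := A * b ^ (k0 + j).+1 + s.
have hc : f c = n.
  rewrite /c dm_add // ?hA ?hs ?hn; first lia.
  rewrite /s expnS; nia.
have hcu : f (c + u) = u.
  rewrite /c -addnA /s subnK; last lia.
  rewrite dm_add ?hA ?dmpow //; first lia.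
  by rewrite ltn_exp2l //; lia.
set T0 := 1 + 3 * p.
have hT1 : iter T0 f c = 1.
  rewrite /T0 addnC; have -> : 3 * p = (3 * p - 3) + 3 by lia.
  rewrite -addnA iterD /= hc hfn dmpow dmone iter_fix //.
have hT2 : iter T0 f (c + u) = u.
  by rewrite /T0 addnC iterD /= hcu mulnC iter_mul.
have h1D : in_D f 1.
  split => //; exists 1; split => //=.
have [c1 [hc1 [r1 [hr1 [e1 e2]]]]] := hyp 1 h1D.
have [H [hH eH]] := @shift_lemma b fstar hb f0 f1 T0 c1 [:: c; c + u].
exists (H + c), (r1 + T0); split; first lia.
split; first lia.
rewrite !(iterD r1 T0) -addnA !eH ?inE ?eqxx ?orbT // hT1 hT2.
by split.
Qed.


Lemma iter_comm m q w : iter q f w = w -> iter q f (iter m f w) = iter m f w.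
Proof. by move=> hw; rewrite -iterD addnC iterD hw. Qed.

Lemma main_ind (l : seq nat) : exists h R, 0 < h /\ 1 <= R /\
  forall x, x \in l -> in_D f x -> iter R f (h + x) = u.
Proof.
have [u0 [p [hp hpu]]] := hu.
elim: l => [|y l [h [R [hh [hR IH]]]]]; first by exists 1, 1.
have [hyD|hyD] := classic (in_D f y); last first.
  exists h, R; do 2 split => //.
  move=> x; rewrite inE => /orP [/eqP -> //|]; exact: IH.
have [i [q [hq hiq]]] := @eventually_periodic b fstar hb f0 f1 (h + y).
set T' := p * i + R.
set z := iter T' f (h + y).
have hz : iter q f z = z.
  rewrite /z (_ : T' = (T' - i) + i); last by rewrite subnK // /T'; nia.
  rewrite iterD iter_comm // -iterD hiq.
  done.
have hS : forall x, x \in l -> in_D f x -> iter T' f (h + x) = u.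
  by move=> x hx hxD; rewrite /T' iterD IH // iter_mul.
have [c [r [hc [hr [ecu ecz]]]]] : exists c r, 0 < c /\ 1 <= r /\
    iter r f (c + u) = u /\ iter r f (c + z) = u.
  case: (posnP z) => [z0|zpos].
    have [c0 [R0 [hc0 [hR0 [e1 e2]]]]] := sync0.
    by exists c0, R0; rewrite z0 addn0.
  have hzD : in_D f z by split => //; exists q.
  have [c1 [hc1 [r1 [hr1 [e1 e2]]]]] := hyp z hzD.
  by exists c1, r1.
have [H [hH eH]] := @shift_lemma b fstar hb f0 f1 T' c [seq h + x | x <- y :: l].
exists (H + h), (r + T'); split; first lia.
split; first lia.
move=> x hx hxD.
rewrite iterD -addnA eH; last by apply: map_f.
move: hx; rewrite inE => /orP [/eqP ->|hx]; first by rewrite -/z.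
by rewrite hS.
Qed.

End P4.

Theorem lemma2p2 (b : nat) (fstar : nat -> nat) (mstar u : nat) :
  2 <= b ->
  fstar 0 = 0 ->
  fstar 1 = 1 ->
  coprime b (fstar b.-1) ->
  mstar < b ->
  coprime `|digit_map b fstar mstar - mstar|%N (digit_map b fstar b.-1) ->
  in_D (digit_map b fstar) u ->
  (forall x, in_D (digit_map b fstar) x ->
     exists hx, 0 < hx /\
       concurrently_u_integers (digit_map b fstar) u (hx + u) (hx + x)) ->
  exists h, 0 < h /\
    forall x, in_D (digit_map b fstar) x -> is_u_integer (digit_map b fstar) u (h + x).
Proof.
move=> hb f0 f1 hc1 hm hc2 hu hyp.
have hc1' : coprime b (digit_map b fstar b.-1).
  by rewrite dm_digit //; lia.
have [h [R [hh [hR H]]]] := @main_ind b fstar mstar u hb f0 f1 hm hc1' hc2 hu hyp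
   (iota 0 (2 * Kb b fstar).+1).
exists h; split => // x hx.
exists R; split => //; apply: H => //.
rewrite mem_iota /=; have := @D_bound b fstar hb f0 f1 x hx; lia.
Qed.
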